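(* Let $\mathbf{X}$ be a finitely supported real random variable with $\mathbf{E}[\mathbf{X}]=0$ and $\mathrm{Var}[\mathbf{X}]=1$. Let $q_1(x_1,\dots,x_{ds})$ be a multilinear polynomial of degree at most $d$ with $\|q_1\|_{\mathrm{coeff}}=1$, and let $q_2(x_1,\dots,x_N)$ (with $N\ge ds$) be a multilinear polynomial of degree at most $d$ such that $\|q_1-q_2\|_{\mathrm{coeff}}\le\eta\le1$ (viewing both as polynomials in $x_1,\dots,x_N$). Then for any positive integer $k$ there exists a value $\xi_{k,d,\mathbf{X}}$, depending only on $k$, $d$ and $\mathbf{X}$, such that \[ \mathrm{Mom}_k\big(q_1(\mathbf{X}^{\otimes ds}),q_2(\mathbf{X}^{\otimes N})\big)\le\xi_{k,d,\mathbf{X}}\cdot\eta . \]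
   Context: A multilinear polynomial of degree at most $d$ is $p(x)=\sum_{|S|\le d}\widehat{p}(S)\prod_{i\in S}x_i$ and $\|p\|_{\mathrm{coeff}}=(\sum_S\widehat{p}(S)^2)^{1/2}$. For real random variables $\mathbf{Y},\mathbf{Z}$ with finite moments, $\mathrm{Mom}_k(\mathbf{Y},\mathbf{Z})=\big(\sum_{i=1}^k(\mathbf{E}[\mathbf{Y}^i]-\mathbf{E}[\mathbf{Z}^i])^2\big)^{1/2}$. $\mathbf{X}^{\otimes m}$ is a vector of $m$ i.i.d. copies of $\mathbf{X}$. *)

(* Defs.v *)
From HB Require Import structures.
From mathcomp Require Import all_boot all_order all_algebra.
From mathcomp Require Import reals.
Set Implicit Arguments. Unset Strict Implicit. Unset Printing Implicit Defensive.
Import Order.TTheory GRing.Theory Num.Theory.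
Local Open Scope ring_scope.

(* A multilinear polynomial in N variables x_0..x_(N-1): its coefficient
   function S |-> \hat p(S), S ranging over subsets of 'I_N. *)
Definition mlpoly (R : realType) (N : nat) := {set 'I_N} -> R.

Definition mleval (R : realType) (N : nat) (p : mlpoly R N) (x : 'I_N -> R) : R :=
  \sum_(S : {set 'I_N}) p S * \prod_(i in S) x i.

Definition mldeg_le (R : realType) (N : nat) (p : mlpoly R N) (d : nat) : Prop :=
  forall S : {set 'I_N}, (d < #|S|)%N -> p S = 0.

Definition coeff_norm (R : realType) (N : nat) (p : mlpoly R N) : R :=
  Num.sqrt (\sum_(S : {set 'I_N}) p S ^+ 2).

(* view a polynomial in x_0..x_(m-1) as a polynomial in x_0..x_(N-1)
   (meaningful when m <= N): same coefficients on subsets of the first m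
   variables, 0 elsewhere. *)
Definition mlextend (R : realType) (m N : nat) (q : mlpoly R m) : mlpoly R N :=
  fun S => if [forall i in S, (nat_of_ord i < m)%N]
           then q [set j : 'I_m | [exists i in S, nat_of_ord i == nat_of_ord j]]
           else 0.

Definition mlsub (R : realType) (N : nat) (p q : mlpoly R N) : mlpoly R N :=
  fun S => p S - q S.

(* A finitely supported real random variable X is given by its distribution:
   values a i taken with probability w i, i : 'I_n. *)
Definition is_fdist (R : realType) (n : nat) (w : 'I_n -> R) : Prop :=
  (forall i, 0 <= w i) /\ \sum_(i < n) w i = 1.

Definition fexp (R : realType) (n : nat) (a w : 'I_n -> R) : R :=
  \sum_(i < n) w i * a i.

Definition fvar (R : realType) (n : nat) (a w : 'I_n -> R) : R :=
  \sum_(i < n) w i * (a i - fexp a w) ^+ 2.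

(* E[ p(X^{\otimes m})^j ], X^{\otimes m} = m i.i.d. copies of X:
   sum over all outcomes f : 'I_m -> 'I_n of the product probability. *)
Definition tens_moment (R : realType) (n : nat) (a w : 'I_n -> R)
    (m : nat) (p : mlpoly R m) (j : nat) : R :=
  \sum_(f : {ffun 'I_m -> 'I_n})
     (\prod_(l < m) w (f l)) * (mleval p (fun l => a (f l))) ^+ j.

Definition Mom (R : realType) (n : nat) (a w : 'I_n -> R) (k : nat)
    (m : nat) (p : mlpoly R m) (M : nat) (q : mlpoly R M) : R :=
  Num.sqrt (\sum_(1 <= j < k.+1)
     (tens_moment a w p j - tens_moment a w q j) ^+ 2).

(* Main.v *)
Require Import Defs.
From HB Require Import structures.
From mathcomp Require Import all_boot all_order all_algebra.
From mathcomp Require Import reals.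
From mathcomp Require Import ring lra zify.
Import Order.TTheory GRing.Theory Num.Theory.
Local Open Scope ring_scope.


Section Pure.
Variable R : realType.

Lemma evenabs (y : R) k : `|y| ^+ (2 * k) = y ^+ (2 * k).
Proof. by rewrite !exprM real_normK ?num_real. Qed.

Lemma amgm (x y : R) k : 0 <= x -> 0 <= y -> x * y ^+ k <= x ^+ k.+1 + y ^+ k.+1.
Proof.
move=> hx hy; case: (leP x y) => hxy.
  apply: le_trans (_ : y ^+ k.+1 <= _); last by rewrite lerDr exprn_ge0.
  by rewrite exprS ler_wpM2r // exprn_ge0.
apply: le_trans (_ : x ^+ k.+1 <= _); last by rewrite lerDl exprn_ge0.
rewrite exprS ler_wpM2l //; apply: lerXn2r; rewrite ?nnegrE //; exact: ltW.
Qed.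

Lemma pw (x y : R) i s : (2 <= i)%N ->
  `|x| ^+ i * `|y| ^+ s <= x ^+ 2 * `|y| ^+ (i - 2 + s) + `|x| ^+ (i + s).
Proof.
move=> hi; have hx := normr_ge0 x; have hy := normr_ge0 y.
case: (leP `|x| `|y|) => hxy.
  apply: le_trans (_ : x ^+ 2 * `|y| ^+ (i - 2 + s) <= _); last first.
    by rewrite lerDl exprn_ge0.
  rewrite -real_normK ?num_real // exprD mulrA; apply: ler_wpM2r; first exact: exprn_ge0.
  rewrite -[in X in X <= _](subnK hi) exprD [X in X <= _]mulrC; apply: ler_wpM2l; first exact: exprn_ge0.
  by apply: lerXn2r; rewrite ?nnegrE.
apply: le_trans (_ : `|x| ^+ (i + s) <= _); last first.
  by rewrite lerDr mulr_ge0 ?sqr_ge0 ?exprn_ge0.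
rewrite exprD; apply: ler_wpM2l; first exact: exprn_ge0.
by apply: lerXn2r; rewrite ?nnegrE // ltW.
Qed.

Lemma binom_low0 (x y : R) k : 0 <= x -> 0 <= y ->
  y ^+ k.+2 + x * y ^+ k.+1 + x ^+ k.+2 <= (x + y) ^+ k.+2.
Proof.
move=> hx hy; elim: k => [|k IH].
  by rewrite !exprS expr0 !mulr1; nra.
have h2 : 0 <= x + y by rewrite addr_ge0.
have := ler_wpM2l h2 IH.
rewrite -exprS; apply: le_trans.
set A := y ^+ k.+1.
have hA : 0 <= A by exact: exprn_ge0.
set Bx := x ^+ k.+2.
have hB : 0 <= Bx by exact: exprn_ge0.
have hxA : 0 <= x * A by exact: mulr_ge0.
rewrite [y ^+ k.+3]exprS [y ^+ k.+2]exprS -/A [x ^+ k.+3]exprS -/Bx.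
have : 0 <= x * (x * A) by exact: mulr_ge0.
have : 0 <= y * Bx by exact: mulr_ge0.
have : 0 <= x * (y * A) by rewrite mulr_ge0 // mulr_ge0.
nra.
Qed.

Lemma binom_low (x y : R) m : (2 <= m)%N -> 0 <= x -> 0 <= y ->
  y ^+ m + x * y ^+ m.-1 + x ^+ m <= (x + y) ^+ m.
Proof. by case: m => [|[|k]] // _; exact: binom_low0. Qed.

Lemma final_ineq (C al be : R) m : 1 <= C -> 0 <= al -> 0 <= be -> (0 < m)%N ->
  be ^+ m + C * (2 * al * be ^+ m.-1 + al ^+ m) <= (3 * C * al + be) ^+ m.
Proof.
move=> hC ha hb hm.
case: (ltngtP m 1) => [|hm1|e]; first by case: m hm.
  have hL : 0 <= 3 * C * al by rewrite !mulr_ge0 // ?(le_trans _ hC).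
  have hbl := @binom_low (3 * C * al) be m hm1 hL hb. apply: (le_trans _ hbl).
  have hbm := exprn_ge0 m.-1 hb.
  have ham := exprn_ge0 m ha.
  have h3 : C * al ^+ m <= (3 * C * al) ^+ m.
    rewrite exprMn; have hCm : C <= (3 * C) ^+ m.
      apply: le_trans (_ : 3 * C <= _).
        by rewrite ler_peMl ?(le_trans _ hC) // ler1n.
      apply: ler_eXnr => //.
      by rewrite mulr_ege1 // ler1n.
    by apply: ler_wpM2r.
  have : C * (2 * al * be ^+ m.-1) <= 3 * C * al * be ^+ m.-1.
    rewrite !mulrA; apply: ler_wpM2r => //; apply: ler_wpM2r => //.
    lra.
  lra.
by rewrite e /= !expr1 expr0; lra.
Qed.

End Pure.


Section Ext.
Variables (R : realType) (M N : nat) (h : (M <= N)%N) (q : mlpoly R M).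

Definition img (S' : {set 'I_M}) : {set 'I_N} := [set widen_ord h i | i in S'].

Lemma widen_inj : injective (widen_ord h).
Proof. by move=> x y /(congr1 val) /= /val_inj. Qed.

Lemma img_inj : injective img.
Proof. exact: (imset_inj widen_inj). Qed.

Lemma ext_sum (S : {set 'I_N}) :
  @mlextend R M N q S = \sum_(S' : {set 'I_M}) (S == img S')%:R * q S'.
Proof.
rewrite /mlextend; case: ifP => hall.
  set T := [set j : 'I_M | [exists i in S, nat_of_ord i == nat_of_ord j]].
  have hT : S = img T.
    apply/setP => x; apply/idP/imsetP.
      move=> xS; have := forallP hall x; rewrite xS /= => xlt.
      exists (Ordinal xlt); last by apply: val_inj.
      by rewrite inE; apply/existsP; exists x; rewrite xS /=.
    case=> y; rewrite inE => /existsP [i /andP [iS /eqP iy]] ->.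
    by have -> : widen_ord h y = i by apply: val_inj; rewrite /= iy.
  rewrite (bigD1 T) //= hT eqxx mul1r big1 ?addr0 // => S' hS'.
  by rewrite (inj_eq img_inj) eq_sym (negbTE hS') mul0r.
rewrite big1 // => S' _.
case: eqP => [hS|]; last by rewrite mul0r.
move: hall; rewrite hS; move/negbT => /forallPn [x].
by rewrite negb_imply => /andP [/imsetP [y _ ->]] /=; rewrite ltn_ord.
Qed.

Lemma ext_sumf (f : {set 'I_N} -> R) :
  \sum_(S : {set 'I_N}) @mlextend R M N q S * f S = \sum_(S' : {set 'I_M}) q S' * f (img S').
Proof.
under eq_bigr => S _ do rewrite ext_sum mulr_suml.
rewrite exchange_big /=; apply: eq_bigr => S' _.
rewrite (bigD1 (img S')) //= eqxx mul1r big1 ?addr0 // => S hS.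
by rewrite (negbTE hS) !mul0r.
Qed.

Lemma ext_img S' : @mlextend R M N q (img S') = q S'.
Proof.
rewrite ext_sum (bigD1 S') //= eqxx mul1r big1 ?addr0 // => T hT.
by rewrite (inj_eq img_inj) eq_sym (negbTE hT) mul0r.
Qed.

Lemma ext_eval (x : 'I_N -> R) :
  mleval (@mlextend R M N q) x = mleval q (fun i => x (widen_ord h i)).
Proof.
rewrite /mleval ext_sumf; apply: eq_bigr => S' _; congr (_ * _).
by rewrite /img big_imset //; move=> u v _ _; apply: widen_inj.
Qed.

Lemma ext_norm2 :
  \sum_(S : {set 'I_N}) @mlextend R M N q S ^+ 2 = \sum_(S' : {set 'I_M}) q S' ^+ 2.
Proof.
under eq_bigr => S _ do rewrite expr2.
rewrite ext_sumf; apply: eq_bigr => S' _; by rewrite ext_img expr2.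
Qed.

Lemma ext_deg d : mldeg_le q d -> mldeg_le (@mlextend R M N q) d.
Proof.
move=> hd S hS; rewrite ext_sum big1 // => S' _.
case: eqP => [e|]; last by rewrite mul0r.
rewrite hd ?mulr0 //; move: hS; rewrite e /img card_imset //; exact: widen_inj.
Qed.

End Ext.

Section Expect.
Variables (R : realType) (n : nat) (a w : 'I_n -> R).
Hypothesis w_ge0 : forall i, 0 <= w i.
Hypothesis w_sum : \sum_(i < n) w i = 1.

Definition EE (N : nat) (F : {ffun 'I_N -> 'I_n} -> R) : R :=
  \sum_(g : {ffun 'I_N -> 'I_n}) (\prod_(l < N) w (g l)) * F g.
Arguments EE {N} F.

Lemma prodw_ge0 N (g : {ffun 'I_N -> 'I_n}) : 0 <= \prod_(l < N) w (g l).
Proof. by apply: prodr_ge0 => l _; apply: w_ge0. Qed.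

Lemma EE1 N : EE (fun _ : {ffun 'I_N -> 'I_n} => 1) = 1 :> R.
Proof.
rewrite /EE.
under eq_bigr do rewrite mulr1.
rewrite -(bigA_distr_bigA (fun (l : 'I_N) (j : 'I_n) => w j)) /=.
by rewrite big1 // => l _; rewrite w_sum.
Qed.

Lemma EEC N c : EE (fun _ : {ffun 'I_N -> 'I_n} => c) = c.
Proof.
have -> : EE (fun _ : {ffun 'I_N -> 'I_n} => c) = c * EE (fun _ : {ffun 'I_N -> 'I_n} => 1).
  by rewrite /EE mulr_sumr; apply: eq_bigr => g _; rewrite mulr1 mulrC.
by rewrite EE1 mulr1.
Qed.

Lemma EED N (F G : {ffun 'I_N -> 'I_n} -> R) :
  EE (fun g => F g + G g) = EE F + EE G.
Proof. by rewrite /EE -big_split; apply: eq_bigr => g _; rewrite mulrDr. Qed.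

Lemma EEZ N c (F : {ffun 'I_N -> 'I_n} -> R) :
  EE (fun g => c * F g) = c * EE F.
Proof. by rewrite /EE mulr_sumr; apply: eq_bigr => g _; rewrite mulrCA. Qed.

Lemma EE_sum N (I : finType) (F : I -> {ffun 'I_N -> 'I_n} -> R) :
  EE (fun g => \sum_i F i g) = \sum_i EE (F i).
Proof.
rewrite /EE exchange_big /=; apply: eq_bigr => g _; by rewrite mulr_sumr.
Qed.

Lemma EE_le N (F G : {ffun 'I_N -> 'I_n} -> R) :
  (forall g, F g <= G g) -> EE F <= EE G.
Proof.
move=> h; rewrite /EE; apply: ler_sum => g _.
by apply: ler_wpM2l; [apply: prodw_ge0 | apply: h].
Qed.

Lemma EE_abs N (F G : {ffun 'I_N -> 'I_n} -> R) :
  (forall g, `|F g| <= G g) -> `|EE F| <= EE G.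
Proof.
move=> h; rewrite /EE; apply: le_trans (ler_norm_sum _ _ _) _.
apply: ler_sum => g _; rewrite normrM ger0_norm ?prodw_ge0 //.
by apply: ler_wpM2l; [apply: prodw_ge0 | apply: h].
Qed.

Definition upd N (g : {ffun 'I_N -> 'I_n}) (v : 'I_N) (j : 'I_n) :
  {ffun 'I_N -> 'I_n} := [ffun l => if l == v then j else g l].
Arguments upd {N} g v j.

Lemma updK N (g : {ffun 'I_N -> 'I_n}) v j : upd (upd g v j) v (g v) = g.
Proof. by apply/ffunP => l; rewrite !ffunE; case: eqP => [->|]. Qed.

Lemma upd_v N (g : {ffun 'I_N -> 'I_n}) v j : upd g v j v = j.
Proof. by rewrite ffunE eqxx. Qed.

Lemma sum_upd N (v : 'I_N) (Psi : {ffun 'I_N -> 'I_n} -> R) :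
  \sum_(g : {ffun 'I_N -> 'I_n}) Psi g = \sum_(g : {ffun 'I_N -> 'I_n}) \sum_j w (g v) * Psi (upd g v j).
Proof.
rewrite pair_bigA /=.
pose phi (p : {ffun 'I_N -> 'I_n} * 'I_n) := (upd p.1 v p.2, p.1 v).
have phiK : involutive phi.
  by case=> g j; rewrite /phi /= updK upd_v.
rewrite (reindex_inj (inv_inj phiK)) /=.
rewrite /phi /=.
rewrite (eq_bigr (fun p => w p.2 * Psi p.1)); last first.
  by case=> g j _ /=; rewrite upd_v updK.
rewrite -(pair_bigA _ (fun g j => w j * Psi g)) /=.
apply: eq_bigr => g _.
by rewrite -mulr_suml w_sum mul1r.
Qed.

Lemma EE_indep N (v : 'I_N) (G : 'I_n -> R) (F : {ffun 'I_N -> 'I_n} -> R) :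
  (forall g j, F (upd g v j) = F g) ->
  EE (fun g => G (g v) * F g) = (\sum_j w j * G j) * EE F.
Proof.
move=> hF.
pose rho (g : {ffun 'I_N -> 'I_n}) := \prod_(l < N | l != v) w (g l).
have hprod (g : {ffun 'I_N -> 'I_n}) : \prod_(l < N) w (g l) = w (g v) * rho g.
  by rewrite (bigD1 v).
have hrho (g : {ffun 'I_N -> 'I_n}) j : rho (upd g v j) = rho g.
  by apply: eq_bigr => l hl; rewrite ffunE (negbTE hl).
rewrite /EE (@sum_upd N v (fun g => (\prod_(l < N) w (g l)) * (G (g v) * F g))).
rewrite mulr_sumr; apply: eq_bigr => g _.
rewrite (eq_bigr (fun j => (w (g v) * rho g * F g) * (w j * G j))); last first.
  move=> j _; rewrite hprod hrho upd_v hF.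
  ring.
by rewrite -mulr_sumr hprod mulrC.
Qed.


Definition ev N (p : mlpoly R N) (g : {ffun 'I_N -> 'I_n}) : R :=
  mleval p (fun l => a (g l)).

Definition wn N (L : R) (p : mlpoly R N) : R :=
  \sum_(S : {set 'I_N}) L ^+ #|S| * p S ^+ 2.

Definition pq N (p : mlpoly R N) (v : 'I_N) : mlpoly R N :=
  fun S => if v \in S then 0 else p (v |: S).
Definition pr N (p : mlpoly R N) (v : 'I_N) : mlpoly R N :=
  fun S => if v \in S then 0 else p S.
Arguments ev {N} p g.
Arguments wn {N} L p.
Arguments pq {N} p v.
Arguments pr {N} p v.

Lemma split_sum N (v : 'I_N) (f : {set 'I_N} -> R) :
  \sum_(S : {set 'I_N}) f S = \sum_(S : {set 'I_N}) (if v \in S then 0 else f (v |: S))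
             + \sum_(S : {set 'I_N}) (if v \in S then 0 else f S).
Proof.
rewrite (bigID (fun S : {set 'I_N} => v \in S)) /=; congr (_ + _); last first.
  by rewrite big_mkcond /=; apply: eq_bigr => S _; case: (v \in S).
rewrite (reindex_onto (fun S => v |: S) (fun S => S :\ v)) /=; last first.
  by move=> S hS; rewrite setD1K.
rewrite big_mkcond /=; apply: eq_bigr => S _.
have -> : (v \in v |: S) && ((v |: S) :\ v == S) = (v \notin S).
  rewrite setU11 /=; apply/eqP/idP => [h|h]; last by rewrite setU1K.
  by rewrite -h !inE eqxx.
by case: (v \in S).
Qed.

Lemma mleval_split N (p : mlpoly R N) v x :
  mleval p x = x v * mleval (pq p v) x + mleval (pr p v) x.
Proof.
rewrite /mleval (@split_sum N v (fun S => p S * \prod_(i in S) x i)); congr (_ + _); last first.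
  by apply: eq_bigr => S _; rewrite /pr; case: (v \in S); rewrite ?mul0r.
rewrite mulr_sumr; apply: eq_bigr => S _; rewrite /pq.
case hS: (v \in S); first by rewrite mul0r mulr0.
by rewrite big_setU1 ?hS //= mulrCA.
Qed.

Lemma wn_split N (L : R) (p : mlpoly R N) v :
  wn L p = L * wn L (pq p v) + wn L (pr p v).
Proof.
rewrite /wn (@split_sum N v (fun S => L ^+ #|S| * p S ^+ 2)); congr (_ + _); last first.
  by apply: eq_bigr => S _; rewrite /pr; case: (v \in S); rewrite ?expr2 ?mulr0.
rewrite mulr_sumr; apply: eq_bigr => S _; rewrite /pq.
case hS: (v \in S); first by rewrite expr2 !mulr0.
by rewrite cardsU1 hS /= add1n exprS mulrA.
Qed.

Lemma mleval_indep N (p : mlpoly R N) (v : 'I_N) (x y : 'I_N -> R) :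
  (forall S : {set 'I_N}, v \in S -> p S = 0) -> (forall l, l != v -> x l = y l) ->
  mleval p x = mleval p y.
Proof.
move=> hp hxy; apply: eq_bigr => S _.
case hS: (v \in S); first by rewrite hp ?mul0r.
congr (_ * _); apply: eq_bigr => i hi; apply: hxy.
by apply: contraNneq (negbT hS) => <-.
Qed.

Lemma ev_upd N (p : mlpoly R N) (v : 'I_N) g j :
  (forall S : {set 'I_N}, v \in S -> p S = 0) -> ev p (upd g v j) = ev p g.
Proof.
move=> hp; rewrite /ev; apply: (@mleval_indep N p v) => // l hl.
by rewrite /upd ffunE (negbTE hl).
Qed.

Lemma wn_ge0 N (L : R) (p : mlpoly R N) : 0 <= L -> 0 <= wn L p.
Proof.
move=> hL; apply: sumr_ge0 => S _; apply: mulr_ge0; first exact: exprn_ge0.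
exact: sqr_ge0.
Qed.

Lemma wn_eq0 N (L : R) (p : mlpoly R N) : 0 < L -> wn L p = 0 ->
  forall x, mleval p x = 0.
Proof.
move=> hL h0 x.
have hS : forall S, p S = 0.
  move=> S.
  have hge : forall S : {set 'I_N}, true -> 0 <= L ^+ #|S| * p S ^+ 2.
    by move=> T _; apply: mulr_ge0; [apply: exprn_ge0; apply: ltW | apply: sqr_ge0].
  move: (@psumr_eq0P _ _ _ _ hge h0 S isT) => /eqP; rewrite mulf_eq0 expf_eq0 (gt_eqF hL) andbF /=.
  by rewrite sqrf_eq0 => /eqP.
by rewrite /mleval big1 // => S _; rewrite hS mul0r.
Qed.

Definition supp N (p : mlpoly R N) (V : {set 'I_N}) :=
  forall S, p S != 0 -> S \subset V.
Arguments supp {N} p V.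

Lemma supp0_ev N (p : mlpoly R N) g : supp p set0 -> ev p g = p set0.
Proof.
move=> hp; rewrite /ev /mleval (bigD1 set0) //= big_set0 mulr1 big1 ?addr0 //.
move=> S hS; case: (eqVneq (p S) 0) => [->|/hp]; first by rewrite mul0r.
by rewrite subset0 (negbTE hS).
Qed.

Lemma supp0_wn N (L : R) (p : mlpoly R N) : supp p set0 -> wn L p = p set0 ^+ 2.
Proof.
move=> hp; rewrite /wn (bigD1 set0) //= cards0 expr0 mul1r big1 ?addr0 //.
move=> S hS; case: (eqVneq (p S) 0) => [->|/hp]; first by rewrite expr0n mulr0.
by rewrite subset0 (negbTE hS).
Qed.


Lemma EE_ext N (F G : {ffun 'I_N -> 'I_n} -> R) :
  (forall g, F g = G g) -> EE F = EE G.
Proof. by move=> h; apply: eq_bigr => g _; rewrite h. Qed.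

Lemma EE_ge0 N (F : {ffun 'I_N -> 'I_n} -> R) :
  (forall g, 0 <= F g) -> 0 <= EE F.
Proof. by move=> h; rewrite -(EEC N 0); apply: EE_le. Qed.

Lemma zbound N m (X Y : {ffun 'I_N -> 'I_n} -> R) (al be : R) :
  (0 < m)%N -> 0 <= al -> 0 <= be ->
  (al = 0 -> forall g, X g = 0) -> (be = 0 -> forall g, Y g = 0) ->
  EE (fun g => X g ^+ (2 * m)) <= al ^+ m ->
  EE (fun g => Y g ^+ (2 * m)) <= be ^+ m ->
  EE (fun g => X g ^+ 2 * Y g ^+ (2 * m - 2)) <= 2 * al * be ^+ m.-1.
Proof.
move=> hm ha hb hX hY EX EY.
case: (ltngtP m 1) => [|hm1|e]; first by case: m hm {EX EY}.
- case: (eqVneq al 0) => [a0|anz].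
    rewrite (@EE_ext _ _ (fun _ => 0)) ?EEC; last by move=> g; rewrite hX // expr2 !mul0r.
    by rewrite !mulr_ge0 // exprn_ge0.
  case: (eqVneq be 0) => [b0|bnz].
    rewrite (@EE_ext _ _ (fun _ => 0)) ?EEC; last first.
      move=> g; rewrite hY // expr0n; have -> : (2 * m - 2 == 0)%N = false by lia.
      by rewrite mulr0.
    by rewrite !mulr_ge0 // exprn_ge0.
  have hap : 0 < al by rewrite lt_def anz ha.
  have hbp : 0 < be by rewrite lt_def bnz hb.
  have hk : m = (m.-1).+1 by case: m hm {EX EY hm1}.
  have key : be * al ^+ m.-1 * EE (fun g => X g ^+ 2 * Y g ^+ (2 * m - 2))
             <= 2 * al ^+ m * be ^+ m.
    rewrite -EEZ.
    apply: le_trans (_ : EE (fun g => (X g ^+ 2 * be) ^+ m + (Y g ^+ 2 * al) ^+ m) <= _).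
      apply: EE_le => g.
      have -> : (2 * m - 2)%N = (2 * m.-1)%N by rewrite {1}hk; lia.
      have := @amgm R (X g ^+ 2 * be) (Y g ^+ 2 * al) m.-1.
      rewrite -hk; move=> h; apply: le_trans (h _ _); last first.
        - by rewrite mulr_ge0 ?sqr_ge0.
        - by rewrite mulr_ge0 ?sqr_ge0.
      rewrite exprMn -exprM le_eqVlt; apply/orP; left; apply/eqP; ring.
    rewrite EED.
    rewrite (@EE_ext _ (fun g => (Y g ^+ 2 * al) ^+ m) (fun g => al ^+ m * Y g ^+ (2 * m))); last first.
      by move=> g; rewrite exprMn -exprM mulrC.
    rewrite (@EE_ext _ (fun g => (X g ^+ 2 * be) ^+ m) (fun g => be ^+ m * X g ^+ (2 * m))); last first.
      by move=> g; rewrite exprMn -exprM mulrC.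
    rewrite !EEZ.
    have h1 : be ^+ m * EE (fun g => X g ^+ (2 * m)) <= be ^+ m * al ^+ m.
      by apply: ler_wpM2l; rewrite ?exprn_ge0.
    have h2 : al ^+ m * EE (fun g => Y g ^+ (2 * m)) <= al ^+ m * be ^+ m.
      by apply: ler_wpM2l; rewrite ?exprn_ge0.
    lra.
  have hpos : 0 < be * al ^+ m.-1 by rewrite mulr_gt0 // exprn_gt0.
  rewrite -(ler_pM2l hpos); apply: le_trans key _.
  rewrite le_eqVlt; apply/orP; left; apply/eqP.
  rewrite {1 2}hk !exprS; ring.
- subst m; rewrite muln1 subnn expr0 /=.
  rewrite (@EE_ext _ _ (fun g => X g ^+ 2)); last by move=> g; rewrite mulr1.
  rewrite expr1 in EX; lra.
Qed.


Hypothesis a_mean : \sum_(i < n) w i * a i = 0.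

Definition Bc : R := 1 + \sum_(j < n) `|a j|.
Definition mu (t : nat) : R := \sum_(j < n) w j * a j ^+ t.
Definition Cm (m : nat) : R := (1 + Bc) ^+ (2 * m).
Definition Lm (m : nat) : R := 3 * Cm m.

Lemma sumabs_ge0 : 0 <= \sum_(j < n) `|a j|.
Proof. by apply: sumr_ge0 => j _. Qed.

Lemma Bc_ge1 : 1 <= Bc.
Proof. by rewrite /Bc lerDl sumabs_ge0. Qed.

Lemma a_le_Bc j : `|a j| <= Bc.
Proof.
rewrite /Bc (bigD1 j) //=.
have : 0 <= \sum_(i < n | i != j) `|a i| by apply: sumr_ge0.
lra.
Qed.

Lemma mu_bound t : `|mu t| <= Bc ^+ t.
Proof.
rewrite /mu; apply: le_trans (ler_norm_sum _ _ _) _.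
apply: le_trans (_ : \sum_(j < n) w j * Bc ^+ t <= _); last by rewrite -mulr_suml w_sum mul1r.
apply: ler_sum => j _; rewrite normrM ger0_norm ?w_ge0 //.
apply: ler_wpM2l => //; rewrite normrX; apply: lerXn2r; rewrite ?nnegrE ?a_le_Bc //.
by apply: le_trans Bc_ge1.
Qed.

Lemma mu0 : mu 0 = 1.
Proof. by rewrite /mu -w_sum; apply: eq_bigr => j _; rewrite expr0 mulr1. Qed.

Lemma mu1 : mu 1 = 0.
Proof. by rewrite /mu -{2}a_mean; apply: eq_bigr => j _; rewrite expr1. Qed.

Lemma Cm_ge1 m : 1 <= Cm m.
Proof. by rewrite /Cm exprn_ege1 // ler_wpDr ?(le_trans _ Bc_ge1). Qed.

Lemma Lm_ge1 m : 1 <= Lm m.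
Proof. have := Cm_ge1 m; rewrite /Lm; lra. Qed.

Lemma Lm_gt0 m : 0 < Lm m.
Proof. by apply: lt_le_trans (Lm_ge1 m). Qed.

Lemma hc_step m N (V : {set 'I_N}) (v : 'I_N) (p : mlpoly R N) :
  (0 < m)%N -> v \in V -> supp p V ->
  (forall p', supp p' (V :\ v) ->
     EE (fun g => ev p' g ^+ (2 * m)) <= wn (Lm m) p' ^+ m) ->
  EE (fun g => ev p g ^+ (2 * m)) <= wn (Lm m) p ^+ m.
Proof.
move=> hm hv hp IH.
set q := pq p v; set r := pr p v; set L := Lm m.
have supq : supp q (V :\ v).
  move=> S; rewrite /q /pq; case hS: (v \in S) => //; rewrite ?eqxx // => /hp.
  move=> sub; apply/subsetP => x hx; rewrite !inE (subsetP sub) ?andbT.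
    by apply: contraFneq hS => <-.
  by rewrite !inE hx orbT.
have supr : supp r (V :\ v).
  move=> S; rewrite /r /pr; case hS: (v \in S) => //; rewrite ?eqxx // => /hp.
  move=> sub; apply/subsetP => x hx; rewrite !inE (subsetP sub) ?andbT //.
  by apply: contraFneq hS => <-.
have hqv : forall S : {set 'I_N}, v \in S -> q S = 0 by move=> S hS; rewrite /q /pq hS.
have hrv : forall S : {set 'I_N}, v \in S -> r S = 0 by move=> S hS; rewrite /r /pr hS.
have hev g : ev p g = ev r g + a (g v) * ev q g.
  by rewrite /ev (@mleval_split N p v) addrC.
set al := wn L q; set be := wn L r.
have hL := Lm_gt0 m.
have hal : 0 <= al by apply: wn_ge0; apply: ltW.
have hbe : 0 <= be by apply: wn_ge0; apply: ltW.
have EX := IH q supq; have EY := IH r supr.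
pose F (i : nat) g := ev r g ^+ (2 * m - i) * ev q g ^+ i *+ 'C(2 * m, i).
have Eexp : EE (fun g => ev p g ^+ (2 * m)) = \sum_(i < (2 * m).+1) mu i * EE (F i).
  rewrite (@EE_ext _ _ (fun g => \sum_(i < (2 * m).+1) a (g v) ^+ i * F i g)); last first.
    move=> g; rewrite hev exprDn; apply: eq_bigr => i _.
    by rewrite /F exprMn mulrCA mulrnAr.
  rewrite EE_sum; apply: eq_bigr => i _.
  rewrite (@EE_indep N v (fun j => a j ^+ i) (F i)) //.
  by move=> g j; rewrite /F !ev_upd.
set Z := EE (fun g => ev q g ^+ 2 * ev r g ^+ (2 * m - 2)) + EE (fun g => ev q g ^+ (2 * m)).
have hZ0 : 0 <= Z.
  rewrite /Z; apply: addr_ge0; apply: EE_ge0 => g.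
    have -> : (2 * m - 2)%N = (2 * (m - 1))%N by lia.
    by rewrite mulr_ge0 ?sqr_ge0 // exprM exprn_ge0 // sqr_ge0.
  by rewrite exprM exprn_ge0 // sqr_ge0.
have Ebound : EE (fun g => ev p g ^+ (2 * m)) <= be ^+ m + Cm m * Z.
  rewrite Eexp.
  have Hs : \sum_(i < (2 * m).+1) mu i * EE (F i) <= \sum_(i < (2 * m).+1) ((val i == 0%N)%:R * be ^+ m + ('C(2 * m, i)%:R * Bc ^+ i) * Z).
    apply: ler_sum => i _.
    have hnn : 0 <= 'C(2 * m, i)%:R * Bc ^+ i * Z.
      by rewrite !mulr_ge0 ?ler0n // exprn_ge0 // (le_trans _ Bc_ge1).
    case: i hnn => [[|[|i]] hi] hnn /=.
    - rewrite mu0 mul1r mul1r; apply: ler_wpDr => //.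
      apply: le_trans EY; apply: EE_le => g; rewrite /F subn0 expr0 mulr1 bin0 mulr1n //.
    - by rewrite mu1 mul0r mul0r add0r.
    - rewrite mul0r add0r; apply: le_trans (ler_norm _) _; rewrite normrM.
      have -> : 'C(2 * m, i.+2)%:R * Bc ^+ i.+2 * Z = Bc ^+ i.+2 * ('C(2 * m, i.+2)%:R * Z) by ring.
      apply: ler_pM => //; first exact: mu_bound.
      have -> : 'C(2 * m, i.+2)%:R * Z = EE (fun g => 'C(2 * m, i.+2)%:R *
          (ev q g ^+ 2 * ev r g ^+ (2 * m - 2) + ev q g ^+ (2 * m))).
        by rewrite EEZ EED.
      apply: EE_abs => g.
      rewrite /F normrMn normrM !normrX -[X in X <= _]mulr_natl; apply: ler_wpM2l => //.
      rewrite mulrC.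
      apply: le_trans (@pw R (ev q g) (ev r g) i.+2 (2 * m - i.+2) isT) _.
      have hi2 : (i.+2 - 2 + (2 * m - i.+2) = 2 * m - 2)%N by lia.
      have hi3 : (i.+2 + (2 * m - i.+2) = 2 * m)%N by lia.
      rewrite hi2 hi3 evenabs.
      have -> : (2 * m - 2)%N = (2 * (m - 1))%N by lia.
      by rewrite evenabs.
  apply: le_trans Hs _.
  rewrite big_split /= -mulr_suml; apply: lerD.
    by rewrite big_ord_recl /= big1 ?addr0 ?mul1r.

  rewrite -mulr_suml; apply: ler_wpM2r => //; rewrite /Cm exprDn le_eqVlt; apply/orP; left; apply/eqP.
  by apply: eq_bigr => i _; rewrite expr1n mul1r mulr_natl.
have Zb : Z <= 2 * al * be ^+ m.-1 + al ^+ m.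
  rewrite /Z; apply: lerD => //.
  apply: zbound => //.
  - by move=> h0 g; apply: wn_eq0 h0 _.
  - by move=> h0 g; apply: wn_eq0 h0 _.
have hwn : wn L p = 3 * Cm m * al + be.
  by rewrite (@wn_split N L p v) /L /Lm.
rewrite hwn; apply: le_trans Ebound _.
apply: le_trans _ (@final_ineq R (Cm m) al be m (Cm_ge1 m) hal hbe hm).
apply: lerD => //; apply: ler_wpM2l => //; apply: le_trans (Cm_ge1 m).
by [].
Qed.


Lemma hc_base m N (p : mlpoly R N) : supp p set0 ->
  EE (fun g => ev p g ^+ (2 * m)) <= wn (Lm m) p ^+ m.
Proof.
move=> hp; rewrite (@EE_ext _ _ (fun _ => p set0 ^+ (2 * m))); last first.
  by move=> g; rewrite supp0_ev.
by rewrite EEC supp0_wn // -exprM.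
Qed.

Lemma hc m N (p : mlpoly R N) :
  EE (fun g => ev p g ^+ (2 * m)) <= wn (Lm m) p ^+ m.
Proof.
case: m => [|m].
  by rewrite muln0 expr0 (@EE_ext _ _ (fun _ => 1)) ?EEC // => g; rewrite expr0.
suff H : forall c (V : {set 'I_N}), (#|V| <= c)%N -> forall p : mlpoly R N, supp p V ->
    EE (fun g => ev p g ^+ (2 * m.+1)) <= wn (Lm m.+1) p ^+ m.+1.
  by apply: (H #|[set: 'I_N]| setT) => // S _; apply: subsetT.
elim=> [|c IH] V hV q hq.
  move: hV; rewrite leqn0 cards_eq0 => /eqP hV0; subst V.
  exact: hc_base.
case: (eqVneq V set0) => [hV0|/set0Pn [v hv]].
  by subst V; apply: hc_base.
apply: (@hc_step m.+1 N V v q) => // p' hp'.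
apply: (IH (V :\ v)) => //.
by move: hV; rewrite (cardsD1 v V) hv add1n ltnS.
Qed.

Lemma wn_deg N (L : R) (p : mlpoly R N) d : 1 <= L -> mldeg_le p d ->
  wn L p <= L ^+ d * \sum_(S : {set 'I_N}) p S ^+ 2.
Proof.
move=> hL hd; rewrite /wn mulr_sumr; apply: ler_sum => S _.
case: (leqP #|S| d) => hS.
  apply: ler_wpM2r; first exact: sqr_ge0.
  rewrite -(subnKC hS) exprD ler_peMr ?exprn_ege1 //.
  by apply: exprn_ge0; apply: le_trans hL.
by rewrite hd // expr2 !mulr0.
Qed.


Definition restr M N (h : (M <= N)%N) (g : {ffun 'I_N -> 'I_n}) : {ffun 'I_M -> 'I_n} :=
  [ffun i => g (widen_ord h i)].
Arguments restr {M N} h g.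

Definition extf N (p : 'I_n * {ffun 'I_N -> 'I_n}) : {ffun 'I_N.+1 -> 'I_n} :=
  [ffun l => if unlift ord_max l is Some i then p.2 i else p.1].
Arguments extf {N} p.

Definition extf_inv N (g : {ffun 'I_N.+1 -> 'I_n}) : 'I_n * {ffun 'I_N -> 'I_n} :=
  (g ord_max, [ffun i => g (lift ord_max i)]).
Arguments extf_inv {N} g.

Lemma extfK N : cancel (@extf N) (@extf_inv N).
Proof.
case=> j f; rewrite /extf_inv /extf ffunE unlift_none; congr (_, _).
by apply/ffunP => i; rewrite !ffunE liftK.
Qed.

Lemma extf_invK N : cancel (@extf_inv N) (@extf N).
Proof.
move=> g; apply/ffunP => l; rewrite /extf /extf_inv ffunE /=.
by case: unliftP => [i ->|->]; rewrite ?ffunE.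
Qed.

Lemma widen_lift N (i : 'I_N) : widen_ord (leqnSn N) i = lift ord_max i.
Proof. by apply: val_inj; rewrite /= /bump leqNgt ltn_ord. Qed.

Lemma EE_marg M N (h : (M <= N)%N) (Phi : {ffun 'I_M -> 'I_n} -> R) :
  EE (fun g : {ffun 'I_N -> 'I_n} => Phi (restr h g)) = EE Phi.
Proof.
elim: N h => [|N IH] h.
  have M0 : M = 0%N by lia.
  subst M; apply: eq_bigr => g _; congr (_ * Phi _).
  by apply/ffunP => i; rewrite ffunE; congr (g _); apply: val_inj.
case: (ltngtP M N.+1) => [hlt|hgt|heq]; last first.
- subst M; apply: eq_bigr => g _; congr (_ * Phi _).
  by apply/ffunP => i; rewrite ffunE; congr (g _); apply: val_inj.
- by exfalso; move: (leq_trans hgt h); rewrite ltnn.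
have hMN : (M <= N)%N by rewrite -ltnS.
rewrite /EE (reindex (@extf N)) /=; last first.
  by apply: onW_bij; exists (@extf_inv N); [apply: extfK | apply: extf_invK].
rewrite -(pair_bigA _ (fun j f => (\prod_(l < N.+1) w (extf (j, f) l)) * Phi (restr h (extf (j, f))))) /=.
transitivity (\sum_(j < n) w j * EE Phi); last by rewrite -mulr_suml w_sum mul1r.
apply: eq_bigr => j _.
rewrite -(IH hMN) /EE mulr_sumr; apply: eq_bigr => f _.
rewrite big_ord_recr /=.
have -> : restr h (extf (j, f)) = restr hMN f.
  apply/ffunP => i; rewrite !ffunE.
  have -> : widen_ord h i = lift ord_max (widen_ord hMN i).
    by apply: val_inj; rewrite /= /bump leqNgt (leq_trans (ltn_ord i) hMN).
  by rewrite liftK.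
rewrite /extf ffunE unlift_none.
under eq_bigr => l _ do rewrite ffunE widen_lift liftK.
by rewrite /=; ring.
Qed.


Lemma EEB N (F G : {ffun 'I_N -> 'I_n} -> R) :
  EE (fun g => F g - G g) = EE F - EE G.
Proof. by rewrite /EE -sumrB; apply: eq_bigr => g _; rewrite mulrBr. Qed.

Lemma amgm2 (x y e : R) : 0 < e -> `|x * y| <= (x ^+ 2 / e + e * y ^+ 2) / 2.
Proof.
move=> he; rewrite normrM -(real_normK (num_real x)) -(real_normK (num_real y)).
set X := `|x|; set Y := `|y|.
have key : (X ^+ 2 / e + e * Y ^+ 2) / 2 - X * Y = (X - e * Y) ^+ 2 / e / 2.
  by field; rewrite gt_eqF.
rewrite -subr_ge0 key; apply: divr_ge0 => //; apply: divr_ge0; [exact: sqr_ge0 | exact: ltW].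
Qed.

Lemma mleval_sub N (P Q : mlpoly R N) x :
  mleval (mlsub P Q) x = mleval P x - mleval Q x.
Proof. by rewrite /mleval -sumrB; apply: eq_bigr => S _; rewrite /mlsub mulrBl. Qed.

Lemma T_bound (x y : R) j :
  (\sum_(i < j) x ^+ (j.-1 - i) * y ^+ i) ^+ 2 <=
  (j ^ 2)%:R * (x ^+ (2 * j.-1) + y ^+ (2 * j.-1)).
Proof.
set Mx := if `|x| <= `|y| then `|y| else `|x|.
have hx0 := normr_ge0 x; have hy0 := normr_ge0 y.
have hM0 : 0 <= Mx by rewrite /Mx; case: (leP `|x| `|y|).
have hxM : `|x| <= Mx by rewrite /Mx; case: (leP `|x| `|y|) => // hh; apply: ltW.
have hyM : `|y| <= Mx by rewrite /Mx; case: (leP `|x| `|y|) => // hh; apply: ltW.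
have hT : `|\sum_(i < j) x ^+ (j.-1 - i) * y ^+ i| <= j%:R * Mx ^+ j.-1.
  apply: le_trans (ler_norm_sum _ _ _) _.
  apply: le_trans (_ : \sum_(i < j) Mx ^+ j.-1 <= _); last first.
    by rewrite sumr_const card_ord mulr_natl.
  apply: ler_sum => i _; rewrite normrM !normrX.
  have hij : (j.-1 - i + i = j.-1)%N by have := ltn_ord i; lia.
  rewrite -{2}hij exprD; apply: ler_pM; rewrite ?exprn_ge0 //;
    by apply: lerXn2r; rewrite ?nnegrE.
have hT2 : (\sum_(i < j) x ^+ (j.-1 - i) * y ^+ i) ^+ 2 <= (j ^ 2)%:R * Mx ^+ (2 * j.-1).
  rewrite -real_normK ?num_real //.
  apply: le_trans (_ : (j%:R * Mx ^+ j.-1) ^+ 2 <= _).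
    by apply: lerXn2r; rewrite ?nnegrE // mulr_ge0 ?ler0n ?exprn_ge0.
  by rewrite exprMn -natrX mulnC exprM.
apply: le_trans hT2 _; apply: ler_wpM2l => //.
rewrite -(@evenabs R x (j.-1)) -(@evenabs R y (j.-1)).
have h1 := exprn_ge0 (2 * j.-1) (normr_ge0 x).
have h2 := exprn_ge0 (2 * j.-1) (normr_ge0 y).
rewrite /Mx; case: (leP `|x| `|y|) => _; lra.
Qed.

Definition cj (d j : nat) : R :=
  Lm 1 ^+ d + (j ^ 2)%:R * ((Lm j.-1 ^+ d) ^+ j.-1 + (Lm j.-1 ^+ d * 4) ^+ j.-1).

Lemma cj_ge0 d j : 0 <= cj d j.
Proof.
have h1 : 0 <= Lm 1 by apply: ltW; apply: Lm_gt0.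
have h2 : 0 <= Lm j.-1 by apply: ltW; apply: Lm_gt0.
by rewrite /cj addr_ge0 ?exprn_ge0 // mulr_ge0 ?ler0n // addr_ge0 // exprn_ge0 // ?mulr_ge0 ?exprn_ge0.
Qed.

Lemma diff_bound d M N (h : (M <= N)%N) (q1 : mlpoly R M) (q2 : mlpoly R N) (eta : R) j :
  mldeg_le q1 d -> \sum_(S : {set 'I_M}) q1 S ^+ 2 = 1 -> mldeg_le q2 d ->
  coeff_norm (mlsub (@mlextend R M N q1) q2) <= eta -> eta <= 1 ->
  `|tens_moment a w q1 j - tens_moment a w q2 j| <= cj d j * eta.
Proof.
move=> hd1 hn1 hd2 hD he1.
set P := @mlextend R M N q1; set D := mlsub P q2.
have heta0 : 0 <= eta by apply: le_trans hD; apply: sqrtr_ge0.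
have hDsum0 : 0 <= \sum_(S : {set 'I_N}) D S ^+ 2 by apply: sumr_ge0 => S _; apply: sqr_ge0.
have hDsum : \sum_(S : {set 'I_N}) D S ^+ 2 <= eta ^+ 2.
  rewrite -(sqr_sqrtr hDsum0); apply: lerXn2r; rewrite ?nnegrE ?sqrtr_ge0 //.
have hPsum : \sum_(S : {set 'I_N}) P S ^+ 2 = 1 by rewrite /P ext_norm2.
have hdP : mldeg_le P d by apply: ext_deg.
have hdD : mldeg_le D d by move=> S hS; rewrite /D /mlsub hdP // hd2 // subr0.
have hQsum : \sum_(S : {set 'I_N}) q2 S ^+ 2 <= 4.
  apply: le_trans (_ : \sum_(S : {set 'I_N}) (2 * P S ^+ 2 + 2 * D S ^+ 2) <= _).
    apply: ler_sum => S _; rewrite /D /mlsub.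
    have := sqr_ge0 (2 * P S - q2 S); rewrite !expr2; nra.
  rewrite big_split /= -!mulr_sumr hPsum.
  have : eta ^+ 2 <= 1 by apply: exprn_ile1.
  lra.
have T1 : tens_moment a w q1 j = EE (fun g : {ffun 'I_N -> 'I_n} => ev P g ^+ j).
  rewrite (@EE_ext _ _ (fun g => ev q1 (restr h g) ^+ j)); last first.
    move=> g; rewrite /ev /P ext_eval /mleval; congr (_ ^+ _); apply: eq_bigr => S _.
    by congr (_ * _); apply: eq_bigr => i _; rewrite ffunE.
  by rewrite (@EE_marg M N h (fun f => ev q1 f ^+ j)).
have T2 : tens_moment a w q2 j = EE (fun g : {ffun 'I_N -> 'I_n} => ev q2 g ^+ j) by [].
pose T g := \sum_(i < j) ev P g ^+ (j.-1 - i) * ev q2 g ^+ i.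
have Ediff : tens_moment a w q1 j - tens_moment a w q2 j = EE (fun g => ev D g * T g).
  rewrite T1 T2 -EEB; apply: EE_ext => g.
  by rewrite subrXX /ev /D mleval_sub.
rewrite Ediff.
case: (eqVneq eta 0) => [e0|enz].
  have hD0 : wn 1 D = 0.
    apply/eqP; rewrite eq_le wn_ge0 // andbT.
    rewrite /wn; under eq_bigr do rewrite expr1n mul1r.
    by move: hDsum; rewrite e0 expr0n.
  rewrite (@EE_ext _ _ (fun _ => 0)) ?EEC ?normr0 ?e0 ?mulr0 //.
  by move=> g; rewrite /ev (@wn_eq0 N 1 D ltr01 hD0) mul0r.
have hep : 0 < eta by rewrite lt_def enz heta0.
set m := j.-1.
have hL1 := Lm_gt0 1; have hLm := Lm_gt0 m.
have E1 : EE (fun g => ev D g ^+ 2) <= Lm 1 ^+ d * eta ^+ 2.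
  have := @hc 1 N D; rewrite muln1 expr1 => h1; apply: le_trans h1 _.
  apply: le_trans (@wn_deg N (Lm 1) D d (Lm_ge1 1) hdD) _.
  by apply: ler_wpM2l => //; apply: exprn_ge0; apply: ltW.
have hLm0 : 0 <= Lm m by apply: ltW.
have E2 : EE (fun g => ev P g ^+ (2 * m)) <= (Lm m ^+ d) ^+ m.
  apply: le_trans (@hc m N P) _; apply: lerXn2r.
  - by rewrite nnegrE; apply: wn_ge0.
  - by rewrite nnegrE; apply: exprn_ge0.
  by apply: le_trans (@wn_deg N (Lm m) P d (Lm_ge1 m) hdP) _; rewrite hPsum mulr1.
have E3 : EE (fun g => ev q2 g ^+ (2 * m)) <= (Lm m ^+ d * 4) ^+ m.
  apply: le_trans (@hc m N q2) _; apply: lerXn2r.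
  - by rewrite nnegrE; apply: wn_ge0.
  - by rewrite nnegrE; apply: mulr_ge0 => //; apply: exprn_ge0.
  apply: le_trans (@wn_deg N (Lm m) q2 d (Lm_ge1 m) hd2) _; apply: ler_wpM2l => //.
  exact: exprn_ge0.
apply: le_trans (@EE_abs N _ (fun g => (1 / eta / 2) * ev D g ^+ 2 +
      (eta / 2 * (j ^ 2)%:R) * (ev P g ^+ (2 * m) + ev q2 g ^+ (2 * m))) _) _.
  move=> g /=. have HH := amgm2 (ev D g) (T g) eta hep. apply: le_trans HH _.
  have := T_bound (ev P g) (ev q2 g) j; rewrite -/m -/(T g) => hTb.
  have : eta * T g ^+ 2 <= eta * ((j ^ 2)%:R * (ev P g ^+ (2 * m) + ev q2 g ^+ (2 * m))).
    by apply: ler_wpM2l.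
  set A := ev D g ^+ 2; set Bt := T g ^+ 2.
  set Cc := (j ^ 2)%:R * (ev P g ^+ (2 * m) + ev q2 g ^+ (2 * m)).
  have -> : 1 / eta / 2 * A + eta / 2 * (j ^ 2)%:R * (ev P g ^+ (2 * m) + ev q2 g ^+ (2 * m))
           = (A / eta + eta * Cc) / 2 by rewrite /Cc; field; rewrite gt_eqF.
  move=> h2; rewrite ler_pdivlMr // divfK ?pnatr_eq0 //; lra.
rewrite EED EEZ EEZ EED.
have hj0 : 0 <= (j ^ 2)%:R :> R by rewrite ler0n.
have : 1 / eta / 2 * EE (fun g => ev D g ^+ 2) <= 1 / eta / 2 * (Lm 1 ^+ d * eta ^+ 2).
  by apply: ler_wpM2l => //; rewrite !divr_ge0 // ltW.
have : eta / 2 * (j ^ 2)%:R * (EE (fun g => ev P g ^+ (2 * m)) + EE (fun g => ev q2 g ^+ (2 * m)))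
       <= eta / 2 * (j ^ 2)%:R * ((Lm m ^+ d) ^+ m + (Lm m ^+ d * 4) ^+ m).
  by apply: ler_wpM2l; [rewrite mulr_ge0 // divr_ge0 // ltW | apply: lerD].
have -> : 1 / eta / 2 * (Lm 1 ^+ d * eta ^+ 2) = eta / 2 * Lm 1 ^+ d by field; rewrite gt_eqF.
have hX : 0 <= eta / 2 * cj d j by rewrite mulr_ge0 ?cj_ge0 // divr_ge0 // ltW.
have -> : cj d j * eta = eta / 2 * Lm 1 ^+ d + eta / 2 * (j ^ 2)%:R * ((Lm m ^+ d) ^+ m + (Lm m ^+ d * 4) ^+ m) + eta / 2 * cj d j.
  by rewrite /cj -/m; field; rewrite ?pnatr_eq0.
lra.
Qed.

End Expect.

Theorem lemma9p7 (R : realType) (n : nat) (a w : 'I_n -> R)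
  (hw : is_fdist w) (hmean : fexp a w = 0) (hvar : fvar a w = 1)
  (k d : nat) (hk : (0 < k)%N) :
  exists xi : R,
    forall (s : nat) (q1 : mlpoly R (d * s)) (N : nat) (q2 : mlpoly R N) (eta : R),
      (d * s <= N)%N ->
      mldeg_le q1 d -> coeff_norm q1 = 1 ->
      mldeg_le q2 d ->
      coeff_norm (mlsub (@mlextend R (d * s) N q1) q2) <= eta -> eta <= 1 ->
      Mom a w k q1 q2 <= xi * eta.
Proof.
case: hw => hw0 hw1.
have hm : \sum_(i < n) w i * a i = 0 by exact: hmean.
exists (Num.sqrt (\sum_(1 <= j < k.+1) cj R n a d j ^+ 2)).
move=> s q1 N q2 eta hN hd1 hn1 hd2 hD he1.
have hsum1 : \sum_(S : {set 'I_(d * s)}) q1 S ^+ 2 = 1.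
  have h0 : 0 <= \sum_(S : {set 'I_(d * s)}) q1 S ^+ 2 by apply: sumr_ge0 => S _; apply: sqr_ge0.
  by rewrite -(sqr_sqrtr h0) -/(coeff_norm q1) hn1 expr1n.
have heta0 : 0 <= eta by apply: le_trans hD; apply: sqrtr_ge0.
have hb j := @diff_bound R n a w hw0 hw1 hm d (d * s) N hN q1 q2 eta j hd1 hsum1 hd2 hD he1.
rewrite /Mom.
have hcs : 0 <= \sum_(1 <= j < k.+1) (cj R n a d j * eta) ^+ 2.
  by apply: sumr_ge0 => j _; apply: sqr_ge0.
apply: le_trans (_ : Num.sqrt (\sum_(1 <= j < k.+1) (cj R n a d j * eta) ^+ 2) <= _).
  rewrite ler_sqrt //; apply: ler_sum => j _.
  rewrite -real_normK ?num_real //; apply: lerXn2r; rewrite ?nnegrE ?normr_ge0 //.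
    by rewrite mulr_ge0 // cj_ge0.
have -> : \sum_(1 <= j < k.+1) (cj R n a d j * eta) ^+ 2
        = eta ^+ 2 * \sum_(1 <= j < k.+1) cj R n a d j ^+ 2.
  by rewrite mulr_sumr; apply: eq_bigr => j _; rewrite exprMn mulrC.
by rewrite sqrtrM ?sqr_ge0 // sqrtr_sqr ger0_norm // mulrC.
Qed.
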